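(* Let $\theta\colon C\to D$ be a continuous covering functor between étale topological categories. Then $\theta^{-1}\colon \Omega(D)\to\Omega(C)$, $U\mapsto\theta^{-1}(U)$, is a morphism of restriction quantal frames.
   Context: Étale topological category: a small category (arrows, identities $C_o$, domain/codomain maps $\mathbf{d},\mathbf{r}$, $ab$ defined iff $\mathbf{d}(a)=\mathbf{r}(b)$) with a topology making $\mathbf{d}$, $\mathbf{r}$ and the multiplication (on composable pairs, subspace of the product) continuous, with $\mathbf{d},\mathbf{r}$ local homeomorphisms. $\Omega(C)$: open subsets of $C$ under inclusion, product $UV=\{uv:u\in U,v\in V,\mathbf{d}(u)=\mathbf{r}(v)\}$, identity $C_o$, $U^{\ast}=\mathbf{d}(U)$, $U^{+}=\mathbf{r}(U)$; it is a restriction quantal frame whose partial isometries are the open local bisections (subsets on which $\mathbf{d},\mathbf{r}$ are injective). A functor $F$ is $\mathbf{d}$-injective if $F(x)=F(y)$ and $\mathbf{d}(x)=\mathbf{d}(y)$ imply $x=y$, and $\mathbf{d}$-surjective if whenever $F(e)=\mathbf{d}(y)$ for an identity $e$ there is $x$ with $\mathbf{d}(x)=e$ and $F(x)=y$; similarly for $\mathbf{r}$. A covering functor is one that is $\mathbf{d}$-injective, $\mathbf{d}$-surjective, $\mathbf{r}$-injective and $\mathbf{r}$-surjective. A restriction quantal frame is a quantal frame $Q$ (a frame with associative multiplication distributing over arbitrary joins) that is a monoid with identity $e$ and an Ehresmann semigroup (projections $e^{\downarrow}$, operations $a^{\ast},a^{+}\in e^{\downarrow}$ fixing projections, $aa^{\ast}=a$,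 $a^{+}a=a$, $(ab)^{\ast}=(a^{\ast}b)^{\ast}$, $(ab)^{+}=(ab^{+})^{+}$) with $\ast,+$ join-preserving, such that the top $1$ is a join of partial isometries and partial isometries are closed under product (a partial isometry is $a$ with $b\le a\Rightarrow b=b^{+}a=ab^{\ast}$). A morphism of restriction quantal frames is a semigroup homomorphism preserving all joins, finite meets, the operations $\ast$ and $+$, the top element and the monoid identity, and mapping partial isometries to partial isometries. *)

(* Defs.v *)
From HB Require Import structures.
From mathcomp Require Import all_boot all_order.
From mathcomp Require Import boolp classical_sets topology.
Set Implicit Arguments. Unset Strict Implicit. Unset Printing Implicit Defensive.
Local Open Scope classical_set_scope.

(* f is a local homeomorphism: continuous, and every point has an open
   neighbourhood U on which f is injective and maps open subsets of U to
   open sets (i.e. f|U is a homeomorphism onto the open set f(U)). *)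
Definition local_homeo (T : topologicalType) (f : T -> T) : Prop :=
  continuous f /\
  forall x, exists U : set T,
    [/\ open U, U x,
        (forall y z, U y -> U z -> f y = f z -> y = z) &
        (forall V : set T, open V -> V `<=` U -> open (f @` V))].

(* An étale topological category with arrow space T.  Multiplication is a
   total function, only meaningful (and constrained) on composable pairs
   (a,b) with dom a = cod b. *)
Record etale_cat (T : topologicalType) := EtaleCat {
  dom : T -> T;
  cod : T -> T;
  mul : T -> T -> T;
  idts : set T;
  dom_idts : forall a, idts (dom a);
  cod_idts : forall a, idts (cod a);
  idts_dom : forall e, idts e -> dom e = e;
  idts_cod : forall e, idts e -> cod e = e;
  dom_mul : forall a b, dom a = cod b -> dom (mul a b) = dom b;
  cod_mul : forall a b, dom a = cod b -> cod (mul a b) = cod a;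
  mulA : forall a b c, dom a = cod b -> dom b = cod c ->
           mul (mul a b) c = mul a (mul b c);
  mul_dom : forall a, mul a (dom a) = a;
  mul_cod : forall a, mul (cod a) a = a;
  dom_cont : continuous dom;
  cod_cont : continuous cod;
  mul_cont : {within [set p : T * T | dom p.1 = cod p.2],
               continuous (fun p : T * T => mul p.1 p.2)};
  dom_lh : local_homeo dom;
  cod_lh : local_homeo cod
}.

Section Omega.
Variables (T : topologicalType) (C : etale_cat T).

Definition omul (U V : set T) : set T :=
  [set x | exists u v, [/\ U u, V v, dom C u = cod C v & x = mul C u v]].
Definition ostar (U : set T) : set T := dom C @` U.
Definition oplus (U : set T) : set T := cod C @` U.
Definition oone : set T := idts C.

(* partial isometry of the quantal frame Omega(C) (elements = open sets,
   order = inclusion):  b <= a  implies  b = b^+ a = a b^*. *)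
Definition opisom (A : set T) : Prop :=
  open A /\ forall B : set T, open B -> B `<=` A ->
    B = omul (oplus B) A /\ B = omul A (ostar B).
End Omega.

Definition is_functor (T1 T2 : topologicalType) (C : etale_cat T1)
  (D : etale_cat T2) (F : T1 -> T2) : Prop :=
  [/\ forall a b, dom C a = cod C b -> F (mul C a b) = mul D (F a) (F b),
      forall a, F (dom C a) = dom D (F a),
      forall a, F (cod C a) = cod D (F a) &
      forall e, idts C e -> idts D (F e)].

Definition d_injective T1 T2 (C : etale_cat T1) (D : etale_cat T2) (F : T1 -> T2) :=
  forall x y, F x = F y -> dom C x = dom C y -> x = y.
Definition r_injective T1 T2 (C : etale_cat T1) (D : etale_cat T2) (F : T1 -> T2) :=
  forall x y, F x = F y -> cod C x = cod C y -> x = y.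
Definition d_surjective T1 T2 (C : etale_cat T1) (D : etale_cat T2) (F : T1 -> T2) :=
  forall e y, idts C e -> F e = dom D y -> exists x, dom C x = e /\ F x = y.
Definition r_surjective T1 T2 (C : etale_cat T1) (D : etale_cat T2) (F : T1 -> T2) :=
  forall e y, idts C e -> F e = cod D y -> exists x, cod C x = e /\ F x = y.

Definition covering_functor T1 T2 (C : etale_cat T1) (D : etale_cat T2) (F : T1 -> T2) :=
  [/\ is_functor C D F, d_injective C D F, d_surjective C D F,
      r_injective C D F & r_surjective C D F].

(* h : Omega(D) -> Omega(C) (given on all sets, only its restriction to open
   sets matters) is a morphism of restriction quantal frames. *)
Definition rqf_morphism T2 T1 (D : etale_cat T2) (C : etale_cat T1)
  (h : set T2 -> set T1) : Prop :=
  [/\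
      forall U, open U -> open (h U),
      forall U V, open U -> open V -> h (omul D U V) = omul C (h U) (h V),
      forall (I : Type) (F : I -> set T2), (forall i, open (F i)) ->
        h (\bigcup_i F i) = \bigcup_i h (F i),
      (forall U V, open U -> open V -> h (U `&` V) = h U `&` h V) /\ h setT = setT &
      [/\ (forall U, open U -> h (ostar D U) = ostar C (h U)),
          (forall U, open U -> h (oplus D U) = oplus C (h U)),
          h (oone D) = oone C &
          (forall U, opisom D U -> opisom C (h U))]].

(* Main.v *)
Require Import Defs.
From mathcomp Require Import all_boot all_order.
From mathcomp Require Import boolp classical_sets topology.
Local Open Scope classical_set_scope.

Lemma cod_inj_of_pisom (T : topologicalType) (D : etale_cat T) (U : set T) :
  opisom D U -> forall a b, U a -> U b -> cod D a = cod D b -> a = b.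
Proof.
move=> [oU H] a b Ua Ub e.
have [_ /(_ a) [W [oW Wa Winj _]]] := cod_lh D.
have oB : open (U `&` W) by exact: openI.
have [E1 _] := H _ oB (@subIsetl _ U W).
have : (U `&` W) b.
  rewrite E1; exists (cod D a), b; split => //.
  - by exists a.
  - by rewrite idts_dom ?e //; exact: cod_idts.
  - by rewrite e mul_cod.
move=> [_ Wb]; exact: Winj.
Qed.

Lemma dom_inj_of_pisom (T : topologicalType) (D : etale_cat T) (U : set T) :
  opisom D U -> forall a b, U a -> U b -> dom D a = dom D b -> a = b.
Proof.
move=> [oU H] a b Ua Ub e.
have [_ /(_ a) [W [oW Wa Winj _]]] := dom_lh D.
have oB : open (U `&` W) by exact: openI.
have [_ E2] := H _ oB (@subIsetl _ U W).
have : (U `&` W) b.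
  rewrite E2; exists b, (dom D a); split => //.
  - by exists a.
  - by rewrite idts_cod ?e //; exact: dom_idts.
  - by rewrite e mul_dom.
move=> [_ Wb]; exact: Winj.
Qed.

Theorem mainTheorem4 (T1 T2 : topologicalType) (C : etale_cat T1) (D : etale_cat T2)
  (theta : T1 -> T2) :
  continuous theta -> covering_functor C D theta ->
  rqf_morphism D C (fun U : set T2 => theta @^-1` U)%classic.
Proof.
move=> ct [[Fmul Fdom Fcod Fid] dinj dsurj rinj rsurj].
have opn : forall U, open U -> open (theta @^-1` U).
  by move=> U oU; apply: open_comp => // x _; exact: ct.
have idrefl : forall x, idts D (theta x) -> idts C x /\ dom C x = x.
  move=> x hx.
  have e : dom C x = x.
    apply: dinj; last by rewrite idts_dom //; exact: dom_idts.
    by rewrite Fdom idts_dom.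
  by split => //; rewrite -e; exact: dom_idts.
split.
- exact: opn.
- move=> U V _ _; apply/seteqP; split => x /=.
  + move=> [u [v [Uu Vv duv ex]]].
    have h1 : theta (dom C x) = dom D v by rewrite Fdom ex dom_mul.
    have [v' [dv' tv']] := dsurj _ _ (dom_idts C x) h1.
    have h2 : theta (cod C v') = dom D u by rewrite Fcod tv' duv.
    have [u' [du' tu']] := dsurj _ _ (cod_idts C v') h2.
    exists u', v'; split => //; [by rewrite /= tu'|by rewrite /= tv'|].
    apply: dinj; first by rewrite Fmul // tu' tv'.
    by rewrite dom_mul.
  + move=> [u [v [Uu Vv duv ->]]].
    rewrite Fmul //; exists (theta u), (theta v); split => //.
    by rewrite -Fdom -Fcod duv.
- by move=> I F _; rewrite preimage_bigcup.
- by split => // U V _ _; rewrite preimageI.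
- split.
  + move=> U _; apply/seteqP; split => x /=.
    * move=> [u Uu e].
      have [ix dx] : idts C x /\ dom C x = x.
        by apply: idrefl; rewrite -e; exact: dom_idts.
      have [y [dy ty]] := dsurj _ _ ix (esym e).
      by exists y => //=; rewrite ty.
    * by move=> [y Uy <-]; exists (theta y) => //; rewrite Fdom.
  + move=> U _; apply/seteqP; split => x /=.
    * move=> [u Uu e].
      have [ix dx] : idts C x /\ dom C x = x.
        by apply: idrefl; rewrite -e; exact: cod_idts.
      have [y [dy ty]] := rsurj _ _ ix (esym e).
      by exists y => //=; rewrite ty.
    * by move=> [y Uy <-]; exists (theta y) => //; rewrite Fcod.
  + apply/seteqP; split => x /=.
    * by move=> /idrefl [].
    * exact: Fid.
  + move=> U pU; have [oU _] := pU.
    have ci := @cod_inj_of_pisom _ D U pU; have di := @dom_inj_of_pisom _ D U pU.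
    split; first exact: opn.
    move=> B oB sB; split; apply/seteqP; split => x.
    * move=> Bx; exists (cod C x), x; split => //.
      - by exists x.
      - exact: sB.
      - by rewrite idts_dom //; exact: cod_idts.
      - by rewrite mul_cod.
    * move=> [u [v [[b Bb <-] Uv e ->]]].
      rewrite idts_dom in e; last exact: cod_idts.
      rewrite e mul_cod.
      have tb : theta b = theta v.
        apply: ci => //; first exact: sB.
        by rewrite -!Fcod e.
      by rewrite -(rinj _ _ tb e).
    * move=> Bx; exists x, (dom C x); split => //.
      - exact: sB.
      - by exists x.
      - by rewrite idts_cod //; exact: dom_idts.
      - by rewrite mul_dom.
    * move=> [u [v [Uu [b Bb <-] e ->]]].
      rewrite idts_cod in e; last exact: dom_idts.
      rewrite -e mul_dom.
      have tb : theta b = theta u.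
        apply: di => //; first exact: sB.
        by rewrite -!Fdom e.
      by rewrite -(dinj _ _ tb (esym e)).
Qed.
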